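(* Let $N\ge3$, $P>0$, $\tau\in(0,1)$, $\sigma_t>0$, $c_5\in\mathbb{C}$, $\alpha,\beta\in\mathbb{C}$ with $|\alpha|^2+|\beta|^2=1$. Let $\theta\in(-\pi/2,\pi/2)$ and $\mathbf{h}\in\mathbb{C}^N$ be random with $\mathbf{h}\notin\mathrm{span}(\mathbf{a}(\theta))$ almost surely. Let $\tilde{\mathbf{a}}=\mathbf{a}(\theta)/\|\mathbf{a}(\theta)\|$, $\tilde{\mathbf{h}}=\frac{\mathbf{h}-(\tilde{\mathbf{a}}^H\mathbf{h})\tilde{\mathbf{a}}}{\|\mathbf{h}-(\tilde{\mathbf{a}}^H\mathbf{h})\tilde{\mathbf{a}}\|}$, $\mathbf{t}_1=\alpha\tilde{\mathbf{a}}+\beta\tilde{\mathbf{h}}$, $\mathbf{t}_3,\dots,\mathbf{t}_N$ an orthonormal basis of the orthogonal complement of $\mathrm{span}\{\tilde{\mathbf{a}},\tilde{\mathbf{h}}\}$, and $$\mathrm{SINR}_t=\frac{P\tau|c_5|^2|\mathbf{a}^H\mathbf{t}_1|^2}{\sigma_t^2+\frac{|c_5|^2P(1-\tau)}{N-2}\sum_{i=3}^N|\mathbf{a}^H\mathbf{t}_i|^2}.$$ Then $\mathbb{E}_{\mathbf{h},\theta}[\log(1+\mathrm{SINR}_t)]=\log\big(1+\frac{P\tau|c_5|^2|\alpha|^2N}{\sigma_t^2}\big)$.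
   Context: $j=\sqrt{-1}$. $\mathbf{a}(\theta)\in\mathbb{C}^N$ has $i$-th entry $e^{-j\pi\sin(\theta)\frac{N-(2i-1)}{2}}$. $\mathrm{SINR}_t$ is the SINR at a malicious target acting as communication eavesdropper under the SSJB scheme; the quantity computed is the ergodic information leakage rate to the target. *)

(* Defs.v *)
From HB Require Import structures.
From mathcomp Require Import all_boot all_order all_algebra.
From mathcomp Require Import all_classical all_reals all_analysis.
From mathcomp Require Import complex.
Unset Printing Implicit Defensive.
Import Order.TTheory GRing.Theory Num.Theory.
Local Open Scope ring_scope.
Local Open Scope complex_scope.

Definition cabs {R : realType} (z : R[i]) : R := Normc.normc z.

(* steering vector a(theta): i-th entry (1-based i) is
   exp(-j pi sin(theta) (N-(2i-1))/2) = cos x - j sin x.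
   With 0-based k = i-1, N-(2i-1) = N-(2k+1). *)
Definition steer {R : realType} (N : nat) (th : R) : 'cV[R[i]]_N :=
  \col_(k < N)
    let x := pi * sin th * ((N%:R - (2 * k + 1)%:R) / 2) in
    (cos x)%:C - 'i * (sin x)%:C.

Definition hdot {R : realType} {N : nat} (u v : 'cV[R[i]]_N) : R[i] :=
  \sum_(k < N) (u k 0)^* * v k 0.

Definition vnorm {R : realType} {N : nat} (u : 'cV[R[i]]_N) : R :=
  Num.sqrt (\sum_(k < N) cabs (u k 0) ^+ 2).

Definition in_span1 {R : realType} {N : nat} (a v : 'cV[R[i]]_N) : Prop :=
  exists c : R[i], v = c *: a.

Definition atil {R : realType} (N : nat) (th : R) : 'cV[R[i]]_N :=
  ((vnorm (steer N th))^-1)%:C *: steer N th.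

Definition htil {R : realType} {N : nat} (th : R) (h : 'cV[R[i]]_N)
  : 'cV[R[i]]_N :=
  let hp := h - hdot (atil N th) h *: atil N th in
  ((vnorm hp)^-1)%:C *: hp.

Definition t1 {R : realType} {N : nat} (al be : R[i]) (th : R)
  (h : 'cV[R[i]]_N) : 'cV[R[i]]_N :=
  al *: atil N th + be *: htil th h.

(* t : 'I_(N-2) -> C^N (t j stands for t_{j+3}) is an orthonormal basis of
   the orthogonal complement of span{a~, h~}. *)
Definition onb_compl {R : realType} {N : nat} (th : R) (h : 'cV[R[i]]_N)
  (t : 'I_(N - 2) -> 'cV[R[i]]_N) : Prop :=
  [/\ (forall j k, hdot (t j) (t k) = (j == k)%:R),
      (forall j, hdot (atil N th) (t j) = 0 /\ hdot (htil th h) (t j) = 0) &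
      (forall v, hdot (atil N th) v = 0 -> hdot (htil th h) v = 0 ->
         exists c : 'I_(N - 2) -> R[i], v = \sum_(j < N - 2) c j *: t j)].

Definition SINRt {R : realType} {N : nat} (P tau sig : R) (c5 al be : R[i])
  (th : R) (h : 'cV[R[i]]_N) (t : 'I_(N - 2) -> 'cV[R[i]]_N) : R :=
  let a := steer N th in
  (P * tau * cabs c5 ^+ 2 * cabs (hdot a (t1 al be th h)) ^+ 2) /
  (sig ^+ 2 + cabs c5 ^+ 2 * P * (1 - tau) / (N - 2)%:R *
     \sum_(j < N - 2) cabs (hdot a (t j)) ^+ 2).

(* Main.v *)
Require Import Defs.
From HB Require Import structures.
From mathcomp Require Import all_boot all_order all_algebra.
From mathcomp Require Import all_classical all_reals all_analysis.
From mathcomp Require Import complex ring lra measurable_realfun.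
Import Order.TTheory GRing.Theory Num.Theory.
Local Open Scope ring_scope.
Local Open Scope complex_scope.
Local Open Scope classical_set_scope.
Import HBNNSimple.

Section HD.
Variables (R : realType) (N : nat).
Implicit Types (u v w : 'cV[R[i]]_N) (c : R[i]).

Lemma hdotZr u c v : hdot u (c *: v) = c * hdot u v.
Proof.
rewrite /hdot mulr_sumr; apply: eq_bigr => k _; rewrite mxE.
by rewrite mulrCA.
Qed.

Lemma hdotZl u c v : hdot (c *: u) v = c^* * hdot u v.
Proof.
rewrite /hdot mulr_sumr; apply: eq_bigr => k _; rewrite mxE.
by rewrite rmorphM mulrA.
Qed.

Lemma hdotDr u v w : hdot u (v + w) = hdot u v + hdot u w.
Proof.
rewrite /hdot -big_split; apply: eq_bigr => k _; rewrite mxE.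
by rewrite mulrDr.
Qed.

Lemma hdotBr u v w : hdot u (v - w) = hdot u v - hdot u w.
Proof.
rewrite /hdot -sumrB; apply: eq_bigr => k _; rewrite !mxE.
by rewrite mulrBr.
Qed.

End HD.

Lemma conjR (R : realType) (r : R) : Num.conj (r%:C) = r%:C.
Proof. exact: conjc_real. Qed.

Lemma steer_entry (R : realType) N (th : R) k :
  ((steer N th k 0)^* * steer N th k 0 = 1) /\ cabs (steer N th k 0) = 1.
Proof.
rewrite /steer mxE /cabs.
set x := (pi * _ * _).
have E : (cos x)%:C - 'i * (sin x)%:C = Complex (cos x) (- sin x).
  by apply/eqP; rewrite eq_complex /=; apply/andP; split; apply/eqP; ring.
rewrite E /=; split.
  apply/eqP; rewrite eq_complex /=; apply/andP; split; apply/eqP.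
    by rewrite -(cos2Dsin2 x); ring.
  by ring.
by rewrite sqrrN cos2Dsin2 sqrtr1.
Qed.

Lemma good_SINR (R : realType) (N : nat) (P tau sig : R) (c5 al be : R[i])
  (th : R) (h : 'cV[R[i]]_N) (t : 'I_(N - 2) -> 'cV[R[i]]_N) :
  (0 < N)%N -> onb_compl th h t ->
  SINRt P tau sig c5 al be th h t =
  P * tau * cabs c5 ^+ 2 * cabs al ^+ 2 * N%:R / sig ^+ 2.
Proof.
move=> N0 [_ ht _].
have haa : hdot (steer N th) (steer N th) = N%:R.
  rewrite /hdot; under eq_bigr => k _ do rewrite (@steer_entry _ N th k).1.
  by rewrite sumr_const card_ord.
set s := vnorm (steer N th).
have sE : s = Num.sqrt N%:R.
  rewrite /s /vnorm; under eq_bigr => k _ do rewrite (@steer_entry _ N th k).2 expr1n.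
  by rewrite sumr_const card_ord.
have s0 : 0 < s by rewrite sE sqrtr_gt0 ltr0n.
have s2 : s ^+ 2 = N%:R by rewrite sE sqr_sqrtr // ler0n.
have atE : atil N th = (s^-1)%:C *: steer N th by [].
have key : forall v, hdot (steer N th) v = s%:C * hdot (atil N th) v.
  move=> v; rewrite atE hdotZl conjR mulrA -rmorphM divff ?mul1r //.
  by rewrite gt_eqF.
have att : hdot (atil N th) (atil N th) = 1.
  rewrite {1 2}atE hdotZl hdotZr haa conjR -(rmorph_nat (real_complex R)).
  rewrite -!rmorphM -s2 expr2 (_ : s^-1 * _ = 1) ?rmorph1 //.
  by field; rewrite gt_eqF.
have hpz : hdot (atil N th) (h - hdot (atil N th) h *: atil N th) = 0.
  by rewrite hdotBr hdotZr att mulr1 subrr.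
have htz : hdot (atil N th) (htil th h) = 0 by rewrite /htil /= hdotZr hpz mulr0.
have ht1 : hdot (atil N th) (t1 al be th h) = al.
  by rewrite /t1 hdotDr (hdotZr _ _ _ al) (hdotZr _ _ _ be) htz att mulr1 mulr0 addr0.
have cs : Normc.normc (s%:C) = s.
  by rewrite /= expr0n addr0 sqrtr_sqr ger0_norm // ltW.
rewrite /SINRt key ht1 big1 => [|j _]; last first.
  by rewrite key (ht j).1 mulr0 /cabs Normc.normc0 expr0n.
rewrite mulr0 addr0 /cabs Normc.normcM cs exprMn s2.
ring.
Qed.

Lemma ae_cst_integral (R : realType) (d : measure_display) (T : measurableType d)
  (Pr : probability T R) (g : T -> \bar R) (k : R) (N : set T) :
  (forall x, (0 <= g x)%E) -> 0 <= k -> measurable N -> Pr N = 0%E ->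
  (forall x, ~ N x -> g x = k%:E) ->
  (\int[Pr]_x g x = k%:E)%E.
Proof.
move=> g0 k0 mN PN0 gk.
have PC : Pr (~` N) = 1%E by rewrite probability_setC // PN0 sube0.
have Ik : k%:E = (\int[Pr]_(x in ~` N) (cst k%:E) x)%E.
  rewrite integral_cst; last exact: measurableC.
  by rewrite -[in LHS](mule1 k%:E); congr (_ * _)%E; rewrite -PC.
rewrite ge0_integralTE //.
apply/eqP; rewrite eq_le; apply/andP; split.
- apply: ge_ereal_sup => _ [h /= hle <-].
  rewrite -integralT_nnsfun (ge0_negligible_integral (D := setT) mN) //; first last.
  - move=> x _; rewrite -[0%E]/(0%:E) lee_fin; exact: fun_ge0.
  - by apply/measurable_EFinP; exact: measurable_funPT.
  rewrite setTD Ik.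
  apply: ge0_le_integral => //.
  - exact: measurableC.
  - move=> x _; rewrite -[0%E]/(0%:E) lee_fin; exact: fun_ge0.
  - by apply/measurable_funTS/measurable_EFinP; exact: measurable_funPT.
  - move=> x Nx; rewrite /= -(gk x Nx); exact: hle.
- rewrite Ik.
  rewrite integral_mkcond ge0_integralTE; last first.
    by move=> x; apply: erestrict_ge0 => y _ /=; rewrite lee_fin.
  apply: ereal_sup_le => _ [h /= hle <-]; exists h => //= x.
  apply: (le_trans (hle x)); rewrite /patch; case: ifPn => [/set_mem Nx|_] //.
  by rewrite gk.
Qed.

Theorem lemma12 (R : realType) (d : measure_display) (T : measurableType d)
  (Pr : probability T R) (N : nat) (P tau sig : R) (c5 al be : R[i])
  (th : T -> R) (h : T -> 'cV[R[i]]_N)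
  (t : T -> 'I_(N - 2) -> 'cV[R[i]]_N) :
  (3 <= N)%N -> 0 < P -> 0 < tau < 1 -> 0 < sig ->
  cabs al ^+ 2 + cabs be ^+ 2 = 1 ->
  (forall w, - (pi / 2) < th w < pi / 2) ->
  {ae Pr, forall w, ~ in_span1 (steer N (th w)) (h w)} ->
  (forall w, ~ in_span1 (steer N (th w)) (h w) ->
     onb_compl (th w) (h w) (t w)) ->
  (\int[Pr]_w (ln (1 + SINRt P tau sig c5 al be (th w) (h w) (t w)))%:E
   = (ln (1 + P * tau * cabs c5 ^+ 2 * cabs al ^+ 2 * N%:R / sig ^+ 2))%:E)%E.
Proof.
move=> N3 P0 /andP[tau0 tau1] sig0 _ _ [M [mM PM0 sub]] onb.
have N0 : (0 < N)%N by apply: leq_trans N3.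
set K := P * tau * _ * _ * _ / _.
have K0 : 0 <= K.
  rewrite /K; apply: divr_ge0; [|exact: sqr_ge0]; apply: mulr_ge0; [|exact: ler0n].
  apply: mulr_ge0; [|exact: sqr_ge0]; apply: mulr_ge0; [|exact: sqr_ge0].
  by apply: mulr_ge0; exact: ltW.
have c0 : 0 <= ln (1 + K) by apply: ln_ge0; rewrite lerDl.
set f := fun w => (ln (1 + SINRt P tau sig c5 al be (th w) (h w) (t w)))%:E.
have good : forall w, ~ M w -> f w = (ln (1 + K))%:E.
  move=> w Mw; have gw : ~ in_span1 (steer N (th w)) (h w).
    by move=> ins; apply: Mw; apply: sub => /=; apply.
  by rewrite /f good_SINR //; exact: onb.
rewrite integralE.
rewrite (@ae_cst_integral _ _ _ Pr _ (ln (1 + K)) M) //; last first.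
  move=> w Mw; rewrite funeposE -/(f w) good //; apply/max_idPl; rewrite lee_fin.
  exact: c0.
rewrite (@ae_cst_integral _ _ _ Pr _ 0 M) //; last first.
  move=> w Mw; rewrite funenegE -/(f w) good //; apply/max_idPr; rewrite -EFinN lee_fin oppr_le0; exact: c0.
by rewrite sube0.
Qed.
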